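(* Fix $r\ge 2$ and $\epsilon>0$. For all sufficiently large $k$, in the random coloring of $[1,M_\epsilon]$ described in the context, the probability that there exists a bad $t$-term arithmetic progression in $[1,M_\epsilon]$ with common difference greater than $b$ is at most $\frac12$.
   Context: Ascending wave: positive integers $w_1<\dots<w_n$ with $w_{i+1}-w_i\ge w_i-w_{i-1}$ for $2\le i\le n-1$; $AW(k;r)$ is the least $N$ such that every $r$-coloring of $\{1,\dots,N\}$ has a monochromatic $k$-term ascending wave. Non-integer quantities used as integers are rounded down; $\log=\log_2$. Fix $r\ge2$, $\epsilon>0$, and $k$. Let $K=\lfloor k/(10(4r-4))\rfloor$, $b=AW(K;r-1)-1$, and $M_\epsilon=\lfloor k^{2r-1-\epsilon}/(2^{r-1}(40r)^{r^2-1})\rfloor$. For each $i\in\{0,\dots,r-1\}$ fix a coloring $\gamma_i$ of $\{1,\dots,b\}$ with colors from $\{0,\dots,r-1\}\setminus\{i\}$ having no monochromatic $K$-term ascending wave. Let $A$ be the $r^2\times 2r$ matrix with rows indexed by pairs $(j,i)$, $j\in\{0,\dots,r-1\}$, $i\in\{1,\dots,r\}$, whose row $(j,i)$ has entry $(m+j)\bmod r$ in position $2m+1$ and entry $(i+m-1+j)\bmod r$ in position $2m+2$, for $m=0,\dots,r-1$. Partition $[1,M_\epsilon]$ into consecutive blocks $B_1,B_2,\dots$ of $b$ integers each (the last possibly partial), and group the blocks into consecutive groups of $2r$ blocks. For each group independently, choose a row $(s_1,\dots,s_{2r})$ of $A$ uniformly at random, give the $l$-th block of the group the label $s_l$, and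 color it by $\gamma_{s_l}$ (translated to that block). An arithmetic progression $x_1<\dots<x_t$ is good if for every $c\in\{0,\dots,r-1\}$ there is a term $x_i$ lying in a block $B_j$ such that $B_j$ and $B_{j+1}$ both have label $c$; otherwise it is bad. Here $t=\frac{(4r-2)(2r+1)}{\log(r^2/(r^2-1))}\log k+\frac{(2r+1)(\log r+1)}{\log(r^2/(r^2-1))}$. *)

(* Defs.v *)
From Stdlib Require Import Reals ClassicalDescription.
From mathcomp Require Import all_boot.

Set Implicit Arguments.
Unset Strict Implicit.
Unset Printing Implicit Defensive.

Definition pb (P : Prop) : bool :=
  if excluded_middle_informative P then true else false.

Definition asc_wave (w : nat -> nat) (n : nat) : Prop :=
  (forall i, 1 <= i <= n -> 1 <= w i) /\
  (forall i, 1 <= i < n -> w i < w i.+1) /\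
  (forall i, 2 <= i <= n - 1 -> w i - w i.-1 <= w i.+1 - w i).

Definition AW_prop (k r N : nat) : Prop :=
  forall c : nat -> 'I_r, exists w : nat -> nat,
    asc_wave w k /\ (forall i, 1 <= i <= k -> w i <= N) /\
    (forall i j, 1 <= i <= k -> 1 <= j <= k -> c (w i) = c (w j)).

(* AW(k; r): the least such N (0 if none exists, which does not happen) *)
Definition AW (k r : nat) : nat :=
  match excluded_middle_informative (exists N, pb (AW_prop k r N)) with
  | left h => ex_minn h
  | right _ => 0
  end.

Local Open Scope R_scope.

Definition fl (x : R) : nat := Z.to_nat (Int_part x).

Definition log2 (x : R) : R := (ln x / ln 2).

Definition Meps (r : nat) (eps : R) (k : nat) : nat :=
  fl (Rpower (INR k) (2 * INR r - 1 - eps)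
      / (2 ^ (r - 1) * (40 * INR r) ^ (r * r - 1))).

Definition tlen (r k : nat) : nat :=
  let L := log2 (INR r ^ 2 / (INR r ^ 2 - 1)) in
  fl ((4 * INR r - 2) * (2 * INR r + 1) / L * log2 (INR k)
      + (2 * INR r + 1) * (log2 (INR r) + 1) / L).

Local Close Scope R_scope.

(* entry of row (j, i) (j in {0..r-1}, i in {1..r}) of A in (1-based) position
   pos: position 2m+1 holds (m+j) mod r, position 2m+2 holds (i+m-1+j) mod r *)
Definition Aent (r j i pos : nat) : nat :=
  let m := (pos - 1) %/ 2 in
  if odd pos then (m + j) %% r else (i + m - 1 + j) %% r.

Definition nblocks (b M : nat) : nat := (M + b - 1) %/ b.

Definition ngroups (r b M : nat) : nat := (nblocks b M + 2 * r - 1) %/ (2 * r).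

(* outcome of the random experiment: for each group g, the chosen row
   (j, i) of A, encoded as a pair in 'I_r * 'I_r with i stored as i-1 *)
Definition outcome (r b M : nat) := {ffun 'I_(ngroups r b M) -> 'I_r * 'I_r}.

Definition label (r b M : nat) (om : outcome r b M) (l : nat) : option nat :=
  if (1 <= l <= nblocks b M) then
    match (insub ((l - 1) %/ (2 * r)) : option 'I_(ngroups r b M)) with
    | Some g => let: (j, i) := om g in
                Some (Aent r j i.+1 ((l - 1) %% (2 * r)).+1)
    | None => None
    end
  else None.

Definition in_block (b l x : nat) : Prop := (l - 1) * b < x <= l * b.

Definition good_AP (r b M : nat) (om : outcome r b M) (t a d : nat) : Prop :=
  forall c, c < r -> exists i l, i < t /\ in_block b l (a + i * d) /\
    label om l = Some c /\ label om l.+1 = Some c.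

Definition exists_bad_AP (r b M : nat) (om : outcome r b M) (t : nat) : Prop :=
  exists a d, b < d /\ 1 <= a /\ a + (t - 1) * d <= M /\ ~ good_AP om t a d.

Local Open Scope R_scope.
Definition prob_bad (r b M t : nat) : R :=
  (INR #|[set om : outcome r b M | pb (exists_bad_AP om t)]|
   / INR #|[set: outcome r b M]|).

Local Close Scope R_scope.
Definition Kpar (r k : nat) : nat := k %/ (10 * (4 * r - 4)).
Definition bpar (r k : nat) : nat := AW (Kpar r k) (r - 1) - 1.

(* Main.v *)
Require Import Defs.
From Stdlib Require Import Reals Lra Lia Classical ClassicalDescription ZArith.
From mathcomp Require Import all_boot.
From mathcomp Require Import zify.

Set Implicit Arguments.
Unset Strict Implicit.
Unset Printing Implicit Defensive.

Lemma pigeon (q K : nat) (f : nat -> 'I_q) (s : seq nat) :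
  0 < q -> q * K <= size s -> 0 < K -> exists col : 'I_q, K <= count (fun n => f n == col) s.
Proof.
move=> hq hs hK.
have E : size s = \sum_(col < q) count (fun n => f n == col) s.
  have -> : size s = \sum_(n <- s) 1 by rewrite sum1_size.
  have -> : \sum_(n <- s) 1 = \sum_(n <- s) \sum_(col < q) (f n == col : nat).
    apply: eq_bigr => n _; rewrite (bigD1 (f n)) //= eqxx big1 // => j /negbTE.
    by rewrite eq_sym => ->.
  rewrite (exchange_big_dep xpredT) //=; apply: eq_bigr => col _.
  rewrite -sum1_count [RHS]big_mkcond; apply: eq_bigr => n _; by case: (f n == col).
case: (boolP [exists col : 'I_q, K <= count (fun n => f n == col) s]).
  by move=> /existsP [col h]; exists col.
rewrite negb_exists => /forallP H.
have : size s <= q * K.-1.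
  rewrite E; have -> : q * K.-1 = \sum_(col < q) K.-1 by rewrite sum_nat_const card_ord.
  apply: leq_sum => col _.
  by have := H col; rewrite -ltnNge; case: (K) hK.
move: hs; case: K hK {E H} => // K _; rewrite /= mulnS; lia.
Qed.

Lemma pbE (P : Prop) : pb P = true <-> P.
Proof. by rewrite /pb; case: excluded_middle_informative. Qed.

Lemma AW_prop_pow K q : 0 < q -> 0 < K -> AW_prop K q (2 ^ (q * K)).
Proof.
move=> hq hK c.
have hs0 : q * K <= size (iota 0 (q * K)) by rewrite size_iota.
have [col hcol] := @pigeon q K (fun n => c (2 ^ n)) (iota 0 (q * K)) hq hs0 hK.
set s := [seq n <- iota 0 (q * K) | c (2 ^ n) == col].
have hsz : K <= size s by rewrite size_filter.
have hsort : sorted ltn s by apply: sorted_filter; [exact: ltn_trans | exact: iota_ltn_sorted].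
have hlt : forall i j, i < j < size s -> nth 0 s i < nth 0 s j.
  move=> i j /andP [hij hj]; apply: (sorted_ltn_nth ltn_trans 0 hsort) => //.
    by rewrite inE; apply: ltn_trans hj.
have hmem : forall i, i < size s -> nth 0 s i \in s by move=> i hi; exact: mem_nth.
exists (fun i => 2 ^ (nth 0 s i.-1)); split; [|split].
- split; [move=> i _; exact: expn_gt0|split].
  + move=> i /andP [h1 h2]; rewrite ltn_exp2l //; case: i h1 h2 => // i _ h2 /=.
    by apply: hlt; rewrite leqnn /=; apply: leq_trans hsz.
  + move=> [|[|i]] // /andP [_ h2] /=.
    have hA : nth 0 s i < nth 0 s i.+1 by apply: hlt; apply/andP; split => //; apply: leq_trans hsz; lia.
    have hB : nth 0 s i.+1 < nth 0 s i.+2 by apply: hlt; apply/andP; split => //; apply: leq_trans hsz; lia.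
    have e2 : 2 * 2 ^ (nth 0 s i.+1) <= 2 ^ (nth 0 s i.+2) by rewrite -expnS leq_exp2l.
    have e3 : 2 ^ (nth 0 s i) < 2 ^ (nth 0 s i.+1) by rewrite ltn_exp2l.
    lia.
- move=> i /andP [h1 h2]; rewrite leq_exp2l //.
  have hi : i.-1 < size s by apply: leq_trans hsz; lia.
  have := hmem _ hi.
  by rewrite mem_filter mem_iota /= => /andP [_ /ltnW].
- move=> i j /andP [i1 i2] /andP [j1 j2].
  have hi : i.-1 < size s by apply: leq_trans hsz; lia.
  have hj : j.-1 < size s by apply: leq_trans hsz; lia.
  have := hmem _ hi; have := hmem _ hj.
  by rewrite !mem_filter => /andP [/eqP -> _] /andP [/eqP -> _].
Qed.

Lemma AW_ge2 K q : 0 < q -> 2 <= K -> 2 <= AW K q.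
Proof.
move=> hq hK; rewrite /AW; case: excluded_middle_informative => [h|h].
  case: ex_minnP => m /pbE Pm _.
  have [w [[w1 [w2 _]] [wN _]]] := Pm (fun _ => Ordinal hq).
  have a1 := w1 1 ltac:(lia).
  have a2 := w2 1 ltac:(lia).
  have a3 := wN 2 ltac:(lia).
  lia.
exfalso; apply: h; exists (2 ^ (q * K)); apply/pbE; apply: AW_prop_pow => //; lia.
Qed.

Section Indep.
Variables (n : nat) (T : finType).
Notation D := {ffun 'I_n -> T}.

Definition dep_on (S : {set 'I_n}) (E : D -> bool) :=
  forall u v : D, (forall g, g \in S -> u g = v g) -> E u = E v.

Lemma swap_count S (Q E : D -> bool) : dep_on (~: S) Q -> dep_on S E ->
  #|[set om | Q om && E om]| * #|[set: D]| = #|[set om | Q om]| * #|[set om | E om]|.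
Proof.
move=> hQ hE.
pose mrg (u v : D) : D := [ffun g => if g \in S then v g else u g].
pose psi (p : D * D) := (mrg p.1 p.2, mrg p.2 p.1).
have psiK : cancel psi psi.
  by case=> u v; rewrite /psi /=; congr pair; apply/ffunP => g; rewrite !ffunE; case: (g \in S).
have hQm : forall u v, Q (mrg u v) = Q u.
  by move=> u v; apply: hQ => g; rewrite inE ffunE => /negbTE ->.
have hEm : forall u v, E (mrg v u) = E u.
  by move=> u v; apply: hE => g; rewrite ffunE => ->.
rewrite -!cardsX -(card_preimset _ (can_inj psiK)); apply: eq_card => p.
by rewrite !inE /= hQm hEm andbT.
Qed.

Fixpoint allk (s : nat) (E : nat -> D -> bool) (om : D) : bool :=
  if s is s'.+1 then E 0 om && allk s' (fun k => E k.+1) om else true.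

Lemma allkP s E om : allk s E om = true <-> (forall k, k < s -> E k om).
Proof.
elim: s E => [|s IH] E /=; first by split.
split.
  by move=> /andP [h0 /IH h] [|k] //= hk; apply: h.
move=> h; rewrite h //=; apply/IH => k hk; exact: h.
Qed.

Lemma allk_ext s E u v : (forall k, k < s -> E k u = E k v) -> allk s E u = allk s E v.
Proof.
elim: s E => [|s IH] E //= h; rewrite h //; congr andb; apply: IH => k hk; exact: h.
Qed.

Lemma indep (p q s : nat) (S : nat -> {set 'I_n}) (E : nat -> D -> bool) :
  (forall k, k < s -> dep_on (S k) (E k)) ->
  (forall k, k < s -> #|[set om | E k om]| * q <= p * #|[set: D]|) ->
  (forall k k', k < k' < s -> S k' \subset ~: S k) ->
  #|[set om | allk s E om]| * q ^ s <= p ^ s * #|[set: D]|.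
Proof.
elim: s S E => [|s IH] S E hdep hcnt hdisj.
  by rewrite !expn0 muln1 mul1n; apply: subset_leq_card; apply/subsetP => x; rewrite !inE.
have IH' := IH (fun k => S k.+1) (fun k => E k.+1)
  (fun k hk => hdep k.+1 hk) (fun k hk => hcnt k.+1 hk)
  (fun k k' hk => hdisj k.+1 k'.+1 hk).
set Q := allk s (fun k => E k.+1).
have hQ : dep_on (~: S 0) Q.
  move=> u v huv; apply: allk_ext => k hk; apply: (hdep k.+1 hk) => g hg.
  apply: huv; have := hdisj 0 k.+1 (hk : 0 < k.+1 < s.+1).
  by move=> /subsetP; apply.
have hsw := swap_count hQ (hdep 0 erefl).
have -> : [set om | allk s.+1 E om] = [set om | Q om && E 0 om].
  by apply/setP => om; rewrite !inE /= andbC.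
have h0 := hcnt 0 erefl.
set cD := #|[set: D]| in h0 hsw IH' *.
set cQE := #|[set om | Q om && E 0 om]| in hsw *.
set cQ := #|[set om | Q om]| in hsw IH' *.
set cE := #|[set om | E 0 om]| in hsw h0 *.
have hle : cQE <= cD by apply: subset_leq_card; apply/subsetP => x; rewrite !inE.
case: (posnP cD) => hD.
  by move: hle; rewrite hD leqn0 => /eqP ->.
rewrite -(leq_pmul2r hD).
have -> : cQE * q ^ s.+1 * cD = (cQE * cD) * (q ^ s * q) by rewrite expnSr; nia.
rewrite hsw.
have -> : cQ * cE * (q ^ s * q) = (cQ * q ^ s) * (cE * q) by nia.
have -> : p ^ s.+1 * cD * cD = (p ^ s * cD) * (p * cD) by rewrite expnSr; nia.
exact: leq_mul.
Qed.

End Indep.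

Lemma shift_ex r c m : 0 < r -> c < r -> exists j : 'I_r, (m + j) %% r = c.
Proof.
move=> hr hc; exists (Ordinal (ltn_pmod (c + (r - m %% r)) hr)) => /=.
rewrite modnDmr.
have hm := divn_eq m r; have hmr := ltn_pmod m hr.
set q := m %/ r in hm *; set rr := m %% r in hm hmr *.
have -> : m + (c + (r - rr)) = q.+1 * r + c by rewrite mulSn; lia.
by rewrite modnMDl modn_small.
Qed.

Lemma AentA r c p : 2 <= r -> c < r -> p.+1 < 2 * r ->
  exists rho : 'I_r * 'I_r, Aent r rho.1 rho.2.+1 p.+1 = c /\ Aent r rho.1 rho.2.+1 p.+2 = c.
Proof.
move=> hr hc hp.
have hr0 : 0 < r by lia.
have hr1 : 1 < r by lia.
have [m [-> | ->]] : exists m, p = m.*2 \/ p = m.*2.+1.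
  exists p./2; have := odd_double_half p; case: (odd p) => /= h; [right|left]; lia.
- have [j hj] := shift_ex m hr0 hc.
  exists (j, Ordinal hr0); rewrite /Aent /= odd_double /=.
  have -> : (m.*2.+1 - 1) %/ 2 = m by lia.
  have -> : (m.*2.+2 - 1) %/ 2 = m by lia.
  by rewrite -hj; split; congr (_ %% _); lia.
- have [j hj] := shift_ex m.+1 hr0 hc.
  exists (j, Ordinal hr1); rewrite /Aent /= odd_double /=.
  have -> : (m.*2.+2 - 1) %/ 2 = m by lia.
  have -> : (m.*2.+3 - 1) %/ 2 = m.+1 by lia.
  by rewrite -hj; split; congr (_ %% _); lia.
Qed.

Lemma inj_count (D U : finType) (A : {set D}) (phi : D -> D) (psi : D -> U) :
  (forall om, phi om \in A) -> injective (fun om => (phi om, psi om)) ->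
  #|[set: D]| <= #|A| * #|U|.
Proof.
move=> hA hinj.
rewrite -(card_imset _ hinj) -cardsT -cardsX; apply: subset_leq_card.
by apply/subsetP => x /imsetP [om _ ->]; rewrite !inE hA.
Qed.

Section Lab.
Variables (r b M : nat).
Hypothesis hr : 2 <= r.
Hypothesis hb : 0 < b.
Notation G := (ngroups r b M).
Notation O := (outcome r b M).

Lemma grp_lt l : 1 <= l <= nblocks b M -> (l - 1) %/ (2 * r) < G.
Proof.
move=> /andP [h1 h2]; rewrite /ngroups ltn_divLR; last by lia.
have := divn_eq (nblocks b M + 2 * r - 1) (2 * r).
have := ltn_pmod (nblocks b M + 2 * r - 1) (_ : 0 < 2 * r).
set N := nblocks b M in h2 *; set q := (N + 2 * r - 1) %/ (2 * r).
move=> /(_ ltac:(lia)); lia.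
Qed.

Lemma label_at (om : O) l (g : 'I_G) : 1 <= l <= nblocks b M -> val g = (l - 1) %/ (2 * r) ->
  label om l = Some (Aent r (om g).1 (om g).2.+1 ((l - 1) %% (2 * r)).+1).
Proof.
move=> hl hg; rewrite /label hl -hg valK.
by case: (om g).
Qed.

Lemma label_dep (u v : O) l : (forall g : 'I_G, val g = (l - 1) %/ (2 * r) -> u g = v g) ->
  label u l = label v l.
Proof.
move=> h; rewrite /label; case: (1 <= l <= nblocks b M) => //.
case: insubP => // g _ hg; by rewrite h.
Qed.

Lemma good_count l c : 1 <= l -> l.+1 <= nblocks b M -> c < r ->
  #|[set: O]| <= #|[set om : O | (label om l == Some c) && (label om l.+1 == Some c)]| * (r * r).
Proof.
move=> hl hl' hc.
have hl1 : 1 <= l <= nblocks b M by lia.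
have hl2 : 1 <= l.+1 <= nblocks b M by lia.
have hr2 : 0 < 2 * r by lia.
set g1 : 'I_G := Ordinal (grp_lt hl1).
set g2 : 'I_G := Ordinal (grp_lt hl2).
have hdl := divn_eq (l - 1) (2 * r).
have hp := ltn_pmod (l - 1) hr2.
set q := (l - 1) %/ (2 * r) in hdl g1 *.
set p := (l - 1) %% (2 * r) in hdl hp *.
have hU : #|{: 'I_r * 'I_r}| = r * r by rewrite card_prod card_ord.
have : p.+1 < 2 * r \/ p.+1 = 2 * r by lia.
case=> [hA | hB].
- have e1 : l.+1 - 1 = q * (2 * r) + p.+1 by lia.
  have eg : g2 = g1.
    by apply: val_inj; rewrite /= e1 divnMDl // divn_small // addn0.
  have em : (l.+1 - 1) %% (2 * r) = p.+1 by rewrite e1 modnMDl modn_small.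
  have [rho [hr1 hr2']] := AentA hr hc hA.
  have H := @inj_count O _ [set om : O | (label om l == Some c) && (label om l.+1 == Some c)]
    (fun om => [ffun g => if g == g1 then rho else om g]) (fun om => om g1).
  rewrite hU in H; apply: H.
  + move=> om; rewrite inE (label_at _ hl1 (g := g1)) // (label_at _ hl2 (g := g1)); last by rewrite -eg.
    by rewrite em -/p !ffunE eqxx hr1 hr2' !eqxx.
  + move=> u v [] /ffunP h1 h2; apply/ffunP => g; have := h1 g; rewrite !ffunE.
    by case: eqP => [->|].
- have e1 : l.+1 - 1 = q.+1 * (2 * r) by rewrite mulSn; lia.
  have eg2 : val g2 = q.+1 by rewrite /= e1 mulnK.
  have em : (l.+1 - 1) %% (2 * r) = 0 by rewrite e1 modnMl.
  have hne : (g2 == g1) = false by apply/eqP => /(congr1 val); rewrite eg2 /=; lia.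
  have hex : forall i : 'I_r, exists j : 'I_r, Aent r j i.+1 p.+1 = c.
    move=> i; have hr0 : 0 < r by lia.
    have [j hj] := shift_ex (i + (r - 1)) hr0 hc.
    exists j; rewrite /Aent hB oddM /= -hj; congr (_ %% _).
    have -> : (2 * r - 1) %/ 2 = r - 1 by lia.
    lia.
  have [f hf] := fin_all_exists hex.
  have H := @inj_count O _ [set om : O | (label om l == Some c) && (label om l.+1 == Some c)]
    (fun om => [ffun g => if g == g1 then (f (om g1).2, (om g1).2)
                          else if g == g2 then (Ordinal hc, (om g2).2) else om g])
    (fun om => ((om g1).1, (om g2).1)).
  rewrite hU in H; apply: H.
  + move=> om; rewrite inE (label_at _ hl1 (g := g1)) // (label_at _ hl2 (g := g2)) //.
    rewrite em -/p !ffunE eqxx hne eqxx /= hf eqxx /=.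
    by rewrite /Aent /= modn_small.
  + move=> u v [] /ffunP h1 e1' e2'; apply/ffunP => g; have := h1 g; rewrite !ffunE.
    case: eqP => [->|_].
      case: (u g1) e1' => [x1 y1]; case: (v g1) => [x2 y2] /= -> [_ ->] //.
    case: eqP => [->|_] //.
    case: (u g2) e2' => [x1 y1]; case: (v g2) => [x2 y2] /= -> [->] //.
Qed.

End Lab.

Definition blk (b x : nat) := (x - 1) %/ b + 1.

Lemma blk_in b x : 0 < b -> 0 < x -> in_block b (blk b x) x.
Proof.
move=> hb hx; rewrite /in_block /blk addnK.
have h1 := leq_divM (x - 1) b.
have h2 := ltn_ceil (x - 1) hb.
rewrite addn1; lia.
Qed.

Lemma blk_uniq b l x : 0 < b -> in_block b l x -> l = blk b x.
Proof.
move=> hb; rewrite /in_block /blk => /andP [h1 h2].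
have hl : 0 < l by case: l h1 h2 => //=; rewrite mul0n; lia.
have a1 : l - 1 <= (x - 1) %/ b by rewrite leq_divRL //; lia.
have a2 : (x - 1) %/ b < l by rewrite ltn_divLR //; lia.
lia.
Qed.

Lemma blk_le b y M : 0 < b -> 1 <= y <= M -> blk b y <= nblocks b M.
Proof.
move=> hb hy; rewrite /blk /nblocks leq_divRL // mulnDl mul1n.
have := leq_divM (y - 1) b; lia.
Qed.

Lemma blk_gap b x y m : 0 < b -> 1 <= x -> x + m * b < y -> blk b x + m <= blk b y.
Proof.
move=> hb hx hxy; rewrite /blk.
suff : (x - 1) %/ b + m <= (y - 1) %/ b by lia.
rewrite leq_divRL // mulnDl.
have := leq_divM (x - 1) b; lia.
Qed.

Definition lk r b a d k := blk b (a + k * (2 * r + 1) * d).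
Definition Ek r b M a d c k (om : outcome r b M) : bool :=
  ~~ ((label om (lk r b a d k) == Some c) && (label om (lk r b a d k).+1 == Some c)).
Arguments Ek : clear implicits.
Definition ssz r t := (t - 2) %/ (2 * r + 1) + 1.

Lemma test_facts r b M t a d k : 2 <= r -> 0 < b -> 2 <= t -> b < d -> 1 <= a ->
  a + (t - 1) * d <= M -> k < ssz r t ->
  [/\ 1 <= a + k * (2 * r + 1) * d, 1 <= lk r b a d k & (lk r b a d k).+1 <= nblocks b M].
Proof.
move=> hr hb ht hd ha hM hk.
have hk' : k * (2 * r + 1) <= t - 2.
  by rewrite -leq_divRL; [move: hk; rewrite /ssz; lia | lia].
have hx : a + k * (2 * r + 1) * d + d <= M.
  have : (k * (2 * r + 1) + 1) * d <= (t - 1) * d by apply: leq_mul => //; lia.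
  rewrite mulnDl mul1n; lia.
split; first lia; first by rewrite /lk /blk addn1.
have h1 := @blk_gap b (a + k * (2 * r + 1) * d) (a + k * (2 * r + 1) * d + d) 1 hb ltac:(lia) ltac:(lia).
have h2 := @blk_le b (a + k * (2 * r + 1) * d + d) M hb ltac:(lia).
rewrite /lk; lia.
Qed.

Lemma ng_bound r b M t a d c : 2 <= r -> 0 < b -> 2 <= t -> c < r -> b < d -> 1 <= a ->
  a + (t - 1) * d <= M ->
  #|[set om : outcome r b M | allk (ssz r t) (Ek r b M a d c) om]| * (r * r) ^ (ssz r t)
   <= (r * r - 1) ^ (ssz r t) * #|[set: outcome r b M]|.
Proof.
move=> hr hb ht hc hd ha hM.
have hr2 : 0 < 2 * r by lia.
apply: (@indep _ _ _ _ _ (fun k => [set g : 'I_(ngroups r b M) |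
   (val g == (lk r b a d k - 1) %/ (2 * r)) || (val g == lk r b a d k %/ (2 * r))])).
- move=> k hk u v huv; rewrite /Ek.
  have e1 : label u (lk r b a d k) = label v (lk r b a d k).
    by apply: label_dep => g hg; apply: huv; rewrite inE hg eqxx.
  have e2 : label u (lk r b a d k).+1 = label v (lk r b a d k).+1.
    apply: label_dep => g hg; apply: huv; rewrite inE hg subn1 /= eqxx orbT //.
  by rewrite e1 e2.
- move=> k hk.
  have [hx hl1 hl2] := test_facts hr hb ht hd ha hM hk.
  have gc := good_count hr hb hl1 hl2 hc.
  set P := fun om : outcome r b M => (label om (lk r b a d k) == Some c) && (label om (lk r b a d k).+1 == Some c) in gc.
  have -> : [set om | Ek r b M a d c k om] = ~: [set om | P om].
    by apply/setP => om; rewrite !inE.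
  have hC := cardsC [set om | P om].
  rewrite -cardsT in hC.
  set g := #|[set om | P om]| in gc hC *.
  set nD := #|[set: outcome r b M]| in gc hC *.
  set ng := #|~: [set om | P om]| in hC *.
  have hrr : 1 <= r * r by nia.
  nia.
- move=> k k' /andP [hkk' hk'].
  have hk : k < ssz r t by lia.
  have [hx hl1 hl2] := test_facts hr hb ht hd ha hM hk.
  have [hx' hl1' hl2'] := test_facts hr hb ht hd ha hM hk'.
  have hgap : a + k * (2 * r + 1) * d + (2 * r + 1) * b < a + k' * (2 * r + 1) * d.
    have e : k' = k + (k' - k) by lia.
    have h1 : (2 * r + 1) * b < (2 * r + 1) * d by rewrite ltn_pmul2l //; lia.
    have h2 : (2 * r + 1) * d <= (k' - k) * (2 * r + 1) * d.
      by rewrite -mulnA leq_pmull //; lia.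
    rewrite [in X in _ < X]e !mulnDl; lia.
  have hb2 := blk_gap hb hx hgap.
  rewrite -/(lk r b a d k) -/(lk r b a d k') in hb2.
  set L := lk r b a d k in hb2 hl1 hl2 *; set L' := lk r b a d k' in hb2 hl1' hl2' *.
  have a1 : L %/ (2 * r) < (L' - 1) %/ (2 * r).
    rewrite (leq_divRL _ _ hr2) mulSn; have := leq_divM L (2 * r); lia.
  have a2 : (L - 1) %/ (2 * r) <= L %/ (2 * r) by apply: leq_div2r; lia.
  have a3 : (L' - 1) %/ (2 * r) <= L' %/ (2 * r) by apply: leq_div2r; lia.
  apply/subsetP => g; rewrite !inE => /orP [] /eqP ->; apply/negP => /orP [] /eqP; lia.
Qed.

Lemma bad_sub r b M t (om : outcome r b M) : 2 <= r -> 0 < b -> 2 <= t ->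
  pb (exists_bad_AP om t) ->
  exists x : 'I_M.+1 * 'I_M.+1 * 'I_r,
    [&& b < x.1.2, 1 <= x.1.1, x.1.1 + (t - 1) * x.1.2 <= M &
     allk (ssz r t) (Ek r b M x.1.1 x.1.2 x.2) om].
Proof.
move=> hr hb ht /pbE [a [d [hd [ha [hM hng]]]]].
have haM : a < M.+1 by rewrite ltnS; apply: leq_trans hM; exact: leq_addr.
have hdM : d < M.+1.
  have h : d <= (t - 1) * d by rewrite leq_pmull //; lia.
  rewrite ltnS; apply: leq_trans hM; apply: leq_trans h _; exact: leq_addl.
have [c hc] : exists c, c < r /\ ~ (exists i l, i < t /\ in_block b l (a + i * d) /\
    label om l = Some c /\ label om l.+1 = Some c).
  apply: NNPP => hno; apply: hng => c hc; apply: NNPP => hno2; apply: hno; exists c; split => //.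
case: hc => hc hnc.
exists (Ordinal haM, Ordinal hdM, Ordinal hc) => /=.
rewrite hd ha hM /=; apply/allkP => k hk; rewrite /Ek.
apply/negP => /andP [/eqP h1 /eqP h2]; apply: hnc.
have [hx _ _] := test_facts hr hb ht hd ha hM hk.
exists (k * (2 * r + 1)), (lk r b a d k); split.
  move: hk; rewrite /ssz => hk.
  have : k * (2 * r + 1) <= t - 2 by rewrite -leq_divRL; lia.
  lia.
split; last by [].
by apply: blk_in.
Qed.

Lemma comb r b M t : 2 <= r -> 0 < b -> 2 <= t ->
  #|[set om : outcome r b M | pb (exists_bad_AP om t)]| * (r * r) ^ (ssz r t)
  <= M.+1 * M.+1 * r * (r * r - 1) ^ (ssz r t) * #|[set: outcome r b M]|.
Proof.
move=> hr hb ht.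
set s := ssz r t.
pose NG (x : 'I_M.+1 * 'I_M.+1 * 'I_r) := [set om : outcome r b M |
  [&& b < x.1.2, 1 <= x.1.1, x.1.1 + (t - 1) * x.1.2 <= M &
     allk s (Ek r b M x.1.1 x.1.2 x.2) om]].
have hcard : forall A : {set outcome r b M}, #|A| = \sum_om (om \in A : nat).
  by move=> A; rewrite -sum1_card big_mkcond; apply: eq_bigr => om _; case: (om \in A).
have h1 : #|[set om : outcome r b M | pb (exists_bad_AP om t)]| <= \sum_x #|NG x|.
  rewrite hcard.
  under [X in _ <= X]eq_bigr => x _ do rewrite hcard.
  rewrite [X in _ <= X](exchange_big_dep xpredT) //=.
  apply: leq_sum => om _; case: (boolP (om \in _)) => // /[!inE] hbad.
  have [x hx] := bad_sub hr hb ht hbad.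
  by rewrite (bigD1 x) //= inE hx.
have h2 : forall x, #|NG x| * (r * r) ^ s <= (r * r - 1) ^ s * #|[set: outcome r b M]|.
  move=> x; case: (boolP [&& b < x.1.2, 1 <= x.1.1 & x.1.1 + (t - 1) * x.1.2 <= M]).
    move=> /and3P [hd ha hM].
    have := ng_bound hr hb ht (ltn_ord x.2) hd ha hM.
    suff -> : NG x = [set om | allk (ssz r t) (Ek r b M x.1.1 x.1.2 x.2) om] by [].
    by apply/setP => om; rewrite !inE hd ha hM.
  move=> hn; suff -> : NG x = set0 by rewrite cards0.
  apply/setP => om; rewrite !inE; apply/negP => /and4P [a1 a2 a3 _].
  by move: hn; rewrite a1 a2 a3.
apply: leq_trans; first exact: (leq_mul h1 (leqnn _)).
rewrite big_distrl /=.
apply: (@leq_trans (\sum_(x : 'I_M.+1 * 'I_M.+1 * 'I_r) ((r * r - 1) ^ s * #|[set: outcome r b M]|))).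
  by apply: leq_sum => x _; exact: h2.
rewrite big_const iter_addn_0 !card_prod !card_ord.
by rewrite mulnC !mulnA.
Qed.


Local Open Scope R_scope.

Lemma INR_muln m n : INR (m * n)%N = INR m * INR n.
Proof. by rewrite mulnE mult_INR. Qed.

Lemma INR_expn m n : INR (m ^ n)%N = INR m ^ n.
Proof. elim: n => [|n IH]; first by rewrite expn0. by rewrite expnS INR_muln IH. Qed.

Lemma INR_subn m n : (n <= m)%N -> INR (m - n)%N = INR m - INR n.
Proof. by move=> h; rewrite subnE minus_INR //; apply/leP. Qed.

Lemma fl_lb x : x - 1 < INR (fl x).
Proof.
rewrite /fl; have [h1 h2] := base_Int_part x.
case: (Z_le_gt_dec 0 (Int_part x)) => hz.
  rewrite INR_IZR_INZ Z2Nat.id //; lra.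
have : (IZR (Int_part x) <= -1) by apply: IZR_le; lia.
have := pos_INR (Z.to_nat (Int_part x)); lra.
Qed.

Lemma fl_ub x : 0 <= x -> INR (fl x) <= x.
Proof.
move=> hx; rewrite /fl; have [h1 h2] := base_Int_part x.
case: (Z_le_gt_dec 0 (Int_part x)) => hz.
  by rewrite INR_IZR_INZ Z2Nat.id.
case: (Int_part x) hz => [|p|p] /= hz; try lia; simpl; lra.
Qed.

Lemma INR_addn m n : INR (m + n)%N = INR m + INR n.
Proof. by rewrite addnE plus_INR. Qed.

Lemma exp_le' x y : x <= y -> exp x <= exp y.
Proof. move=> h; case: (Rle_lt_or_eq_dec _ _ h) => [h'|->]; [left; exact: exp_increasing | right; reflexivity]. Qed.

Lemma ln_le' x y : 0 < x -> x <= y -> ln x <= ln y.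
Proof. move=> hx h; case: (Rle_lt_or_eq_dec _ _ h) => [h'|->]; [left; exact: ln_increasing | right; reflexivity]. Qed.


Definition Treal (r k : nat) : R :=
  let L := log2 (INR r ^ 2 / (INR r ^ 2 - 1)) in
  (4 * INR r - 2) * (2 * INR r + 1) / L * log2 (INR k)
      + (2 * INR r + 1) * (log2 (INR r) + 1) / L.

Lemma tlenE r k : tlen r k = fl (Treal r k).
Proof. by []. Qed.

Lemma real_main r eps k M t :
  (2 <= r)%N -> 0 < eps -> 2 / Rmin eps 1 <= ln (INR k) ->
  INR M <= Rpower (INR k) (2 * INR r - 1 - eps) ->
  Treal r k - 1 < INR t ->
  (2 <= t)%N /\ (2 * (M.+1 * M.+1 * r * (r * r - 1) ^ ssz r t) <= (r * r) ^ ssz r t)%N.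
Proof.
move=> hr heps hX hM ht.
set Rr := INR r.
have hR : 2 <= Rr by rewrite /Rr; change 2 with (INR 2); apply: le_INR; apply/leP.
set e' := Rmin eps 1.
have he1 : 0 < e' by apply: Rmin_glb_lt; lra.
have he2 : e' <= 1 by apply: Rmin_r.
have he3 : e' <= eps by apply: Rmin_l.
set X := ln (INR k) in hX.
have hX2 : e' * X >= 2.
  have := Rmult_le_compat_l e' _ _ (Rlt_le _ _ he1) hX.
  rewrite /Rdiv -Rmult_assoc (Rmult_comm e' 2) Rmult_assoc Rinv_r; lra.
have hX1 : X >= 2 by nra.
have l2p : 0 < ln 2 by have := ln_lt_2; lra.
have l2l : ln 2 < 1.
  rewrite -[X in _ < X](ln_exp 1); apply: ln_increasing; first lra.
  have := exp_ineq1 1 ltac:(lra); lra.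
set q := Rr ^ 2 / (Rr ^ 2 - 1).
have hq1 : 1 < q.
  rewrite /q; apply: (Rmult_lt_reg_r (Rr ^ 2 - 1)); first nra.
  rewrite /Rdiv Rmult_assoc Rinv_l; nra.
have hq2 : q <= 2.
  rewrite /q; apply: (Rmult_le_reg_r (Rr ^ 2 - 1)); first nra.
  rewrite /Rdiv Rmult_assoc Rinv_l; nra.
set L := ln q.
have hL0 : 0 < L by rewrite /L -ln_1; apply: ln_increasing; lra.
have hL1 : L <= ln 2 by apply: ln_le'; lra.
have hlnR : 0 <= ln Rr by rewrite -ln_1; apply: ln_le'; lra.
have hT : Treal r k * L = (2 * Rr + 1) * ((4 * Rr - 2) * X + ln Rr + ln 2).
  rewrite /Treal /log2 -/Rr -/q -/L -/X; field; lra.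
have hTpos : Treal r k >= 60.
  have a1 : (4 * Rr - 2) * X >= 12 by nra.
  have h60 : (2 * Rr + 1) * ((4 * Rr - 2) * X + ln Rr + ln 2) >= 60 by nra.
  nra.
have ht2 : (2 <= t)%N.
  case: (leqP 2 t) => // h; exfalso.
  have : (t <= 1)%N by lia.
  move=> /leP /le_INR; change (INR 1) with 1; lra.
split => //.
set s := ssz r t.
have hsn : (t <= s * (2 * r + 1) + 1)%N.
  have := ltn_ceil (t - 2) (_ : (0 < 2 * r + 1)%N); rewrite /s /ssz addn1; lia.
have hsR : INR t <= INR s * (2 * Rr + 1) + 1.
  have := le_INR _ _ (elimT leP hsn).
  by rewrite INR_addn INR_muln INR_addn INR_muln -/Rr.
have hsL : INR s * L >= (4 * Rr - 2) * X + ln Rr.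
  have h1 : INR s * L * (2 * Rr + 1) >= Treal r k * L - 2 * L by nra.
  rewrite hT in h1.
  have h2 : ln 2 * Rr >= 2 * ln 2 by nra.
  nra.
set Y := exp ((2 * Rr - 1 - e') * X).
have hY1 : 1 <= Y by rewrite /Y -[X in X <= _]exp_0; apply: exp_le'; apply: Rmult_le_pos; lra.
have hMY : INR M <= Y.
  apply: Rle_trans hM _; rewrite /Rpower; apply: exp_le'; rewrite -/X; apply: Rmult_le_compat_r; [lra | change (INR r) with Rr; lra].
have hE : exp ((4 * Rr - 2) * X) = Y * Y * exp (2 * (e' * X)).
  rewrite /Y -!exp_plus; congr exp; ring.
have he4 : 16 <= exp (2 * (e' * X)).
  have h4 : exp 4 = exp 1 * exp 1 * (exp 1 * exp 1) by rewrite -!exp_plus; congr exp; ring.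
  have he : 2 < exp 1 by have := exp_ineq1 1 ltac:(lra); lra.
  apply: (Rle_trans _ (exp 4)); last by apply: exp_le'; nra.
  rewrite h4; have hEE : exp 1 * exp 1 >= 4 by nra.
  nra.
have hqs : exp ((4 * Rr - 2) * X) * Rr <= q ^ s.
  rewrite -Rpower_pow; last lra.
  have -> : exp ((4 * Rr - 2) * X) * Rr = exp ((4 * Rr - 2) * X + ln Rr) by rewrite exp_plus exp_ln; lra.
  rewrite /Rpower -/L; apply: exp_le'; lra.
have hmain : 2 * ((INR M + 1) * (INR M + 1) * Rr) <= q ^ s.
  apply: Rle_trans hqs; rewrite hE.
  have hM0 := pos_INR M.
  have hA : (INR M + 1) * (INR M + 1) <= 4 * (Y * Y) by nra.
  have hB : 0 <= Y * Y by nra.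
  have h1 : Y * Y * 16 <= Y * Y * exp (2 * (e' * X)) by apply: Rmult_le_compat_l.
  have h2 : 2 * ((INR M + 1) * (INR M + 1)) <= Y * Y * exp (2 * (e' * X)) by lra.
  have := Rmult_le_compat_r Rr _ _ ltac:(lra) h2.
  lra.
apply/leP; apply: INR_le.
have hrr : (1 <= r * r)%N by nia.
rewrite !INR_muln !INR_expn INR_subn // !INR_muln -/Rr !S_INR.
change (INR 2) with 2; change (INR 1) with 1.
have hP : 0 <= (Rr * Rr - 1) ^ s by apply: pow_le; nra.
have hQ : Rr * Rr = q * (Rr * Rr - 1) by rewrite /q; field; nra.
rewrite [in X in _ <= X]hQ Rpow_mult_distr ?INR_0.
have := Rmult_le_compat_r _ _ _ hP hmain.
rewrite !Rplus_0_l; lra.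
Qed.

Lemma main_aux (r : nat) (eps : R) :
  (2 <= r)%N -> 0 < eps ->
  exists k0 : nat, forall k : nat, (k0 <= k)%N ->
    prob_bad r (bpar r k) (Meps r eps k) (tlen r k) <= / 2.
Proof.
move=> hr heps.
set e' := Rmin eps 1.
have he1 : 0 < e' by apply: Rmin_glb_lt; lra.
set z := up (exp (2 / e')).
have [hz1 _] := archimed (exp (2 / e')).
rewrite -/z in hz1.
have hexp := exp_pos (2 / e').
have hz0 : (0 <= z)%Z by apply: le_IZR; lra.
exists (maxn (20 * (4 * r - 4)) (Z.to_nat z)) => k hk.
have hk1 : (20 * (4 * r - 4) <= k)%N by move: hk; rewrite geq_max => /andP [].
have hk2 : (Z.to_nat z <= k)%N by move: hk; rewrite geq_max => /andP [].
have hK : (2 <= Kpar r k)%N by rewrite /Kpar leq_divRL; lia.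
have hb : (0 < bpar r k)%N.
  have := @AW_ge2 (Kpar r k) (r - 1) ltac:(lia) hK; rewrite /bpar; lia.
set b := bpar r k in hb *.
set M := Meps r eps k.
set t := tlen r k.
have hX : 2 / Rmin eps 1 <= ln (INR k).
  have h1 : exp (2 / e') <= INR k.
    have := le_INR _ _ (elimT leP hk2); rewrite INR_IZR_INZ Z2Nat.id // -/z; lra.
  rewrite -/e' -[X in X <= _](ln_exp (2 / e')); exact: ln_le'.
have hM : INR M <= Rpower (INR k) (2 * INR r - 1 - eps).
  rewrite /M /Meps.
  set A := Rpower (INR k) (2 * INR r - 1 - eps).
  have hA : 0 <= A by rewrite /A /Rpower; left; exact: exp_pos.
  set Dn := 2 ^ (r - 1) * (40 * INR r) ^ (r * r - 1).
  have hD : 1 <= Dn.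
    have h2 : 1 <= 2 ^ (r - 1) by apply: pow_R1_Rle; lra.
    have h40 : 1 <= (40 * INR r) ^ (r * r - 1).
      apply: pow_R1_Rle; have := pos_INR r; have : INR 2 <= INR r by apply: le_INR; apply/leP.
      change (INR 2) with 2; lra.
    rewrite /Dn; nra.
  have hAD : A / Dn <= A.
    rewrite /Rdiv; have : / Dn <= 1 by rewrite -Rinv_1; apply: Rinv_le_contravar; lra.
    have : 0 < / Dn by apply: Rinv_0_lt_compat; lra.
    nra.
  apply: Rle_trans hAD; apply: fl_ub; rewrite /Rdiv; apply: Rmult_le_pos => //.
  left; apply: Rinv_0_lt_compat; lra.
have ht : Treal r k - 1 < INR t by rewrite /t tlenE; exact: fl_lb.
have [ht2 hnat] := real_main hr heps hX hM ht.
have hc := comb M hr hb ht2.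
set s := ssz r t in hnat hc.
set nB := #|[set om : outcome r b M | pb (exists_bad_AP om t)]| in hc *.
set nD := #|[set: outcome r b M]| in hc *.
have hQ : (0 < (r * r) ^ s)%N by rewrite expn_gt0; nia.
have h2B : (2 * nB <= nD)%N.
  rewrite -(leq_pmul2r hQ).
  apply: (@leq_trans (2 * (M.+1 * M.+1 * r * (r * r - 1) ^ s * nD))%N).
    by rewrite -mulnA leq_pmul2l.
  rewrite mulnA [in X in (_ <= X)%N]mulnC; exact: leq_mul hnat (leqnn nD).
have hD0 : (0 < nD)%N.
  have hr0 : (0 < r)%N by lia.
  apply/card_gt0P; exists [ffun _ => (Ordinal hr0, Ordinal hr0)]; by rewrite inE.
rewrite /prob_bad -/b -/M -/t -/nB -/nD.
have hDR : 0 < INR nD by apply: lt_0_INR; apply/ltP.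
have hBR : 2 * INR nB <= INR nD.
  have := le_INR _ _ (elimT leP h2B); rewrite INR_muln; change (INR 2) with 2; lra.
rewrite /Rdiv; apply: (Rle_trans _ (INR nD / 2 * / INR nD)).
  apply: Rmult_le_compat_r; [left; exact: Rinv_0_lt_compat | lra].
right; field; lra.
Qed.

Local Close Scope R_scope.

Theorem lemma2p2 (r : nat) (eps : R) :
  2 <= r -> (Rlt 0 eps) ->
  exists k0 : nat, forall k : nat, k0 <= k ->
    Rle (prob_bad r (bpar r k) (Meps r eps k) (tlen r k)) (Rinv 2).
Proof. exact: main_aux. Qed.
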